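(* Let $\lambda>0$, $L_x,L_y>0$, $K_x=L_x/\lambda$, $K_y=L_y/\lambda$, let $\alpha_1,\alpha_2\in[-1,1]$, let $C\neq 0$ be a complex constant, and let $P>0$, $\sigma^2>0$. Define, for $(\beta_1,\beta_2)\in[-1,1]^2$, $$H(\beta_1,\beta_2)=C\,\mathrm{sinc}\big(K_x\pi(\alpha_1-\beta_1)\big)\,\mathrm{sinc}\big(K_y\pi(\alpha_2-\beta_2)\big),\qquad \mu(\beta_1,\beta_2)=\big|\sqrt{P}\,H(\beta_1,\beta_2)\big|^2+\sigma^2 .$$ Let $(\beta_1^0,\beta_2^0)\in[-1,1]^2$ and let $v,w>0$ satisfy $K_xv\in\mathbb{N}$, $K_yw\in\mathbb{N}$, $|\beta_1^0\pm v|\le 1$ and $|\beta_2^0\pm w|\le 1$. Suppose the five values $\mu(\beta_1^0,\beta_2^0)$, $\mu(\beta_1^0+v,\beta_2^0)$, $\mu(\beta_1^0-v,\beta_2^0)$, $\mu(\beta_1^0,\beta_2^0+w)$, $\mu(\beta_1^0,\beta_2^0-w)$ are known. Define $$\alpha_1^{(1)/(2)}=\beta_1^0+\frac{v}{1\pm\sqrt{\left|\frac{\mu(\beta_1^0,\beta_2^0)-\sigma^2}{\mu(\beta_1^0+v,\beta_2^0)-\sigma^2}\right|}},\qquad \alpha_1^{(3)/(4)}=\beta_1^0-\frac{v}{1\pm\sqrt{\left|\frac{\mu(\beta_1^0,\beta_2^0)-\sigma^2}{\mu(\beta_1^0-v,\beta_2^0)-\sigma^2}\right|}},$$ $$\alpha_2^{(1)/(2)}=\beta_2^0+\frac{w}{1\pm\sqrt{\left|\frac{\mu(\beta_1^0,\beta_2^0)-\sigma^2}{\mu(\beta_1^0,\beta_2^0+w)-\sigma^2}\right|}},\qquad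 \alpha_2^{(3)/(4)}=\beta_2^0-\frac{w}{1\pm\sqrt{\left|\frac{\mu(\beta_1^0,\beta_2^0)-\sigma^2}{\mu(\beta_1^0,\beta_2^0-w)-\sigma^2}\right|}},$$ where the superscript $(1)$ (resp. $(3)$) corresponds to the sign $+$ and $(2)$ (resp. $(4)$) to the sign $-$ in the denominator. Then the maximizer $(\beta_1^*,\beta_2^* )=\arg\max_{(\beta_1,\beta_2)\in[-1,1]^2}\mu(\beta_1,\beta_2)$ is given by $$\beta_1^*=\frac{\alpha_1^{(i)}+\alpha_1^{(j)}}{2}\ \text{ where }(i,j)\in\{1,2\}\times\{3,4\}\text{ minimizes }|\alpha_1^{(i)}-\alpha_1^{(j)}|,$$ $$\beta_2^*=\frac{\alpha_2^{(i)}+\alpha_2^{(j)}}{2}\ \text{ where }(i,j)\in\{1,2\}\times\{3,4\}\text{ minimizes }|\alpha_2^{(i)}-\alpha_2^{(j)}|.$$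
   Context: $\mathrm{sinc}(x)=\sin(x)/x$ (with $\mathrm{sinc}(0)=1$) and $\mathbb{N}$ denotes the natural numbers. This models the far-field channel $H$ between a holographic metasurface transceiver of size $L_x\times L_y$ (carrier wavelength $\lambda$) and a user, where $(\beta_1,\beta_2)$ are the phase-shift parameters at the surface and $\alpha_1=\sin\theta\cos\phi$, $\alpha_2=\sin\theta\sin\phi$ encode the (unknown) user direction; $\mu(\beta_1,\beta_2)$ is the expected received power $\mathbb{E}|\sqrt{P}H(\beta_1,\beta_2)+\zeta|^2$ when a pilot of power $P$ is sent and $\zeta$ is zero-mean complex Gaussian noise of variance $\sigma^2$. *)

(* Defs.v *)
From Stdlib Require Import Reals Lra.
From Coquelicot Require Import Coquelicot.
Open Scope R_scope.

Definition sinc (x : R) : R :=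
  if Req_EM_T x 0 then 1 else sin x / x.

Definition chanH (lam Lx Ly a1 a2 : R) (Cc : C) (b1 b2 : R) : C :=
  (Cc * RtoC (sinc ((Lx / lam) * PI * (a1 - b1)) *
              sinc ((Ly / lam) * PI * (a2 - b2))))%C.

Definition mu (lam Lx Ly a1 a2 : R) (Cc : C) (P sigma2 : R) (b1 b2 : R) : R :=
  (Cmod (RtoC (sqrt P) * chanH lam Lx Ly a1 a2 Cc b1 b2)%C) ^ 2 + sigma2.

Definition sgn_of (b : bool) : R := if b then 1 else -1.

(* alpha^(1) (i = true, sign +) and alpha^(2) (i = false, sign -):
   b0 + v / (1 +- sqrt |(m0 - s2) / (m1 - s2)|) *)
Definition cand_plus (b0 v m0 m1 s2 : R) (i : bool) : R :=
  b0 + v / (1 + sgn_of i * sqrt (Rabs ((m0 - s2) / (m1 - s2)))).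

(* alpha^(3) (j = true, sign +) and alpha^(4) (j = false, sign -):
   b0 - v / (1 +- sqrt |(m0 - s2) / (m1 - s2)|) *)
Definition cand_minus (b0 v m0 m1 s2 : R) (j : bool) : R :=
  b0 - v / (1 + sgn_of j * sqrt (Rabs ((m0 - s2) / (m1 - s2)))).

(* Main.v *)
Require Import Defs.
From Stdlib Require Import Reals Lra Psatz.
From Coquelicot Require Import Coquelicot.
Open Scope R_scope.

Lemma sinc_nz y : y <> 0 -> sinc y = sin y / y.
Proof. intro H. unfold sinc. destruct (Req_EM_T y 0); [contradiction|reflexivity]. Qed.

Lemma sinc_0 : sinc 0 = 1.
Proof. unfold sinc. destruct (Req_EM_T 0 0); [reflexivity|congruence]. Qed.

Lemma sin_sq_shift (n : nat) x : sin (x + INR n * PI) ^ 2 = sin x ^ 2.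
Proof.
  induction n as [|n IH].
  - simpl INR. rewrite Rmult_0_l, Rplus_0_r. reflexivity.
  - rewrite S_INR.
    replace (x + (INR n + 1) * PI) with ((x + INR n * PI) + PI) by ring.
    rewrite neg_sin. rewrite <- IH. ring.
Qed.

Lemma sin_lt_abs_pos y : 0 < y -> Rabs (sin y) < y.
Proof.
  intro Hy. pose proof (sin_lt_x y Hy). pose proof (SIN_bound y).
  pose proof PI2_1. pose proof PI2_Rlt_PI.
  apply Rabs_def1; [lra|].
  destruct (Rle_dec y 1).
  - pose proof (sin_gt_0 y Hy ltac:(lra)). lra.
  - lra.
Qed.

Lemma sinc_sq_le y : sinc y ^ 2 <= 1 /\ (sinc y ^ 2 = 1 -> y = 0).
Proof.
  destruct (Req_EM_T y 0) as [->|Hy].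
  - rewrite sinc_0. split; [lra|auto].
  - rewrite sinc_nz by auto.
    assert (Rabs (sin y) < Rabs y).
    { destruct (Rlt_dec 0 y).
      - rewrite (Rabs_pos_eq y) by lra. now apply sin_lt_abs_pos.
      - rewrite <- Rabs_Ropp, <- sin_neg, <- (Rabs_Ropp y).
        rewrite (Rabs_pos_eq (-y)) by lra. apply sin_lt_abs_pos. lra. }
    assert (sin y ^ 2 < y ^ 2).
    { rewrite <- (pow2_abs (sin y)), <- (pow2_abs y).
      pose proof (Rabs_pos (sin y)). nra. }
    assert (0 < y ^ 2) by (rewrite <- pow2_abs; apply pow_lt; apply Rabs_pos_lt; auto).
    assert (E : (sin y / y) ^ 2 = sin y ^ 2 / y ^ 2) by (field; auto).
    rewrite E. assert (sin y ^ 2 / y ^ 2 < 1).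
    { apply (Rmult_lt_reg_r (y^2)); auto. field_simplify; [lra|]. nra. }
    split; lra.
Qed.

Lemma mu_form lam Lx Ly a1 a2 Cc P s2 b1 b2 : 0 <= P ->
  mu lam Lx Ly a1 a2 Cc P s2 b1 b2 =
  (P * Cmod Cc ^ 2) * (sinc (Lx/lam*PI*(a1-b1)) ^ 2 * sinc (Ly/lam*PI*(a2-b2)) ^ 2) + s2.
Proof.
  intro HP. unfold mu, chanH. rewrite !Cmod_mult, !Cmod_R.
  rewrite Rpow_mult_distr, Rpow_mult_distr, pow2_abs, pow2_abs, pow2_sqrt by auto.
  ring.
Qed.

Lemma alg (b0 v t : R) : 0 < v -> t <> 0 -> Rabs (1 - t) <> 1 -> Rabs (1 + t) <> 1 ->
  forall i j : bool,
  (forall i' j' : bool,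
     Rabs ((b0 + v / (1 + sgn_of i * Rabs (1 - t))) - (b0 - v / (1 + sgn_of j * Rabs (1 + t))))
     <= Rabs ((b0 + v / (1 + sgn_of i' * Rabs (1 - t))) - (b0 - v / (1 + sgn_of j' * Rabs (1 + t))))) ->
  ((b0 + v / (1 + sgn_of i * Rabs (1 - t))) + (b0 - v / (1 + sgn_of j * Rabs (1 + t)))) / 2
  = b0 + v / t.
Proof.
  intros Hv Ht H1 H2 i j Hmin.
  assert (HD : forall i, 1 + sgn_of i * Rabs (1 - t) = t \/ 1 + sgn_of i * Rabs (1 - t) = 2 - t).
  { intro k; destruct k; unfold sgn_of, Rabs in *; destruct (Rcase_abs (1 - t)); lra. }
  assert (HE : forall j, 1 + sgn_of j * Rabs (1 + t) = - t \/ 1 + sgn_of j * Rabs (1 + t) = 2 + t).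
  { intro k; destruct k; unfold sgn_of, Rabs in *; destruct (Rcase_abs (1 + t)); lra. }
  assert (HD0 : exists i0, 1 + sgn_of i0 * Rabs (1 - t) = t).
  { unfold Rabs in *; destruct (Rcase_abs (1 - t)); [exists true|exists false]; unfold sgn_of; lra. }
  assert (HE0 : exists j0, 1 + sgn_of j0 * Rabs (1 + t) = - t).
  { unfold Rabs in *; destruct (Rcase_abs (1 + t)); [exists true|exists false]; unfold sgn_of; lra. }
  assert (HDn : forall i, 1 + sgn_of i * Rabs (1 - t) <> 0).
  { intro k; destruct (HD k) as [E|E]; rewrite E; auto. intro. apply H1. unfold Rabs; destruct (Rcase_abs (1 - t)); lra. }
  assert (HEn : forall j, 1 + sgn_of j * Rabs (1 + t) <> 0).
  { intro k; destruct (HE k) as [E|E]; rewrite E. lra. intro. apply H2. unfold Rabs; destruct (Rcase_abs (1 + t)); lra. }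
  destruct HD0 as [i0 Hi0]. destruct HE0 as [j0 Hj0].
  specialize (Hmin i0 j0). rewrite Hi0, Hj0 in Hmin.
  replace (b0 + v / t - (b0 - v / - t)) with 0 in Hmin by (field; auto).
  rewrite Rabs_R0 in Hmin. pose proof (Rabs_pos (b0 + v / (1 + sgn_of i * Rabs (1 - t)) -
         (b0 - v / (1 + sgn_of j * Rabs (1 + t))))) as Hp.
  assert (Heq : Rabs (b0 + v / (1 + sgn_of i * Rabs (1 - t)) -
         (b0 - v / (1 + sgn_of j * Rabs (1 + t)))) = 0) by lra.
  apply Rabs_eq_0 in Heq.
  specialize (HDn i). specialize (HEn j).
  set (D := 1 + sgn_of i * Rabs (1 - t)) in *.
  set (E := 1 + sgn_of j * Rabs (1 + t)) in *.
  assert (HDE : v * (D + E) = 0).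
  { replace (v * (D + E)) with ((b0 + v / D - (b0 - v / E)) * (D * E)) by (field; auto).
    rewrite Heq. ring. }
  assert (HDE' : D + E = 0).
  { destruct (Rmult_integral _ _ HDE); lra. }
  assert (HDt : D = t).
  { destruct (HD i) as [Ed|Ed]; fold D in Ed; auto.
    destruct (HE j) as [Ee|Ee]; fold E in Ee; lra. }
  replace (b0 - v / E) with (b0 + v / D).
  2:{ replace E with (- D) by lra. field; auto. }
  rewrite HDt. field. auto.
Qed.

Lemma ratio E x d : x <> 0 -> sin d ^ 2 = sin x ^ 2 -> E * sinc d ^ 2 <> 0 ->
  E * sinc x ^ 2 / (E * sinc d ^ 2) = (d / x) ^ 2.
Proof.
  intros Hx Hs Hn.
  assert (HE : E <> 0) by (intro; subst; apply Hn; ring).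
  rewrite (sinc_nz x Hx).
  destruct (Req_EM_T d 0) as [Hd|Hd].
  - subst d. rewrite sin_0 in Hs.
    replace ((sin x / x) ^ 2) with (sin x ^ 2 / x ^ 2) by (field; auto).
    rewrite <- Hs. unfold Rdiv. ring.
  - rewrite (sinc_nz d Hd) in *.
    assert (sin d <> 0) by (intro Hz; apply Hn; rewrite Hz; unfold Rdiv; ring).
    replace ((sin x / x) ^ 2) with (sin d ^ 2 / x ^ 2) by (rewrite Hs; field; auto).
    field. auto.
Qed.

Lemma sqrt_sq_ratio y : sqrt (Rabs (y ^ 2)) = Rabs y.
Proof.
  rewrite (Rabs_pos_eq (y ^ 2)) by apply pow2_ge_0.
  rewrite <- sqrt_Rsqr_abs. f_equal. unfold Rsqr. ring.
Qed.

Lemma one_dim (K a b0 v E s2 : R) (f : R -> R) (n : nat) :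
  0 < K -> 0 < v -> K * v = INR n ->
  (forall b, f b = E * sinc (K * PI * (a - b)) ^ 2 + s2) ->
  f (b0 + v) - s2 <> 0 -> f (b0 - v) - s2 <> 0 ->
  sqrt (Rabs ((f b0 - s2) / (f (b0 + v) - s2))) <> 1 ->
  sqrt (Rabs ((f b0 - s2) / (f (b0 - v) - s2))) <> 1 ->
  forall i j : bool,
  (forall i' j' : bool,
     Rabs (cand_plus b0 v (f b0) (f (b0 + v)) s2 i - cand_minus b0 v (f b0) (f (b0 - v)) s2 j)
     <= Rabs (cand_plus b0 v (f b0) (f (b0 + v)) s2 i' - cand_minus b0 v (f b0) (f (b0 - v)) s2 j')) ->
  (cand_plus b0 v (f b0) (f (b0 + v)) s2 i + cand_minus b0 v (f b0) (f (b0 - v)) s2 j) / 2 = a.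
Proof.
  intros HK Hv Hn Hf Hp Hm Sp1 Sm1 i j Hmin.
  set (x := K * PI * (a - b0)).
  set (c := INR n * PI).
  assert (Ep : K * PI * (a - (b0 + v)) = x - c).
  { unfold x, c. rewrite <- Hn. ring. }
  assert (Em : K * PI * (a - (b0 - v)) = x + c).
  { unfold x, c. rewrite <- Hn. ring. }
  pose proof PI_RGT_0 as HPI.
  assert (Hc : 0 < c).
  { unfold c. rewrite <- Hn. apply Rmult_lt_0_compat; auto. apply Rmult_lt_0_compat; auto. }
  assert (Sxm : sin (x - c) ^ 2 = sin x ^ 2).
  { rewrite <- (sin_sq_shift n (x - c)). fold c. f_equal. f_equal. ring. }
  assert (Sxp : sin (x + c) ^ 2 = sin x ^ 2) by apply sin_sq_shift.
  rewrite !Hf, Ep in Hp. rewrite !Hf, Em in Hm.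
  replace (E * sinc (x - c) ^ 2 + s2 - s2) with (E * sinc (x - c) ^ 2) in Hp by ring.
  replace (E * sinc (x + c) ^ 2 + s2 - s2) with (E * sinc (x + c) ^ 2) in Hm by ring.
  assert (Hx : x <> 0).
  { intro Hx0. apply Hp. rewrite Hx0 in *.
    rewrite sin_0 in Sxm. 
    replace (0 - c) with (- c) in * by ring.
    assert (sin (- c) = 0) by (apply Rsqr_0_uniq; unfold Rsqr; simpl in Sxm; nra).
    rewrite sinc_nz by lra. rewrite H. unfold Rdiv. ring. }
  assert (Sp : sqrt (Rabs ((f b0 - s2) / (f (b0 + v) - s2))) = Rabs (1 - c / x)).
  { rewrite !Hf, Ep. fold x.
    replace (E * sinc x ^ 2 + s2 - s2) with (E * sinc x ^ 2) by ring.
    replace (E * sinc (x - c) ^ 2 + s2 - s2) with (E * sinc (x - c) ^ 2) by ring.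
    rewrite ratio by auto. rewrite sqrt_sq_ratio. f_equal. field. auto. }
  assert (Sm : sqrt (Rabs ((f b0 - s2) / (f (b0 - v) - s2))) = Rabs (1 + c / x)).
  { rewrite !Hf, Em. fold x.
    replace (E * sinc x ^ 2 + s2 - s2) with (E * sinc x ^ 2) by ring.
    replace (E * sinc (x + c) ^ 2 + s2 - s2) with (E * sinc (x + c) ^ 2) by ring.
    rewrite ratio by auto. rewrite sqrt_sq_ratio. f_equal. field. auto. }
  assert (Ha : a = b0 + v / (c / x)).
  { assert (a - b0 <> 0) by (intro Z; apply Hx; unfold x; rewrite Z; ring).
    unfold x, c. rewrite <- Hn. field. repeat split; lra. }
  unfold cand_plus, cand_minus in *. rewrite Sp, Sm in *. rewrite Ha.
  apply alg; auto.
  apply Rmult_integral_contrapositive_currified; [lra|]. apply Rinv_neq_0_compat; auto.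
Qed.
Theorem theorem1 (lam Lx Ly a1 a2 : R) (Cc : C) (P s2 b10 b20 v w : R) :
  0 < lam -> 0 < Lx -> 0 < Ly ->
  -1 <= a1 <= 1 -> -1 <= a2 <= 1 ->
  Cc <> 0%C -> 0 < P -> 0 < s2 ->
  -1 <= b10 <= 1 -> -1 <= b20 <= 1 ->
  0 < v -> 0 < w ->
  (exists n : nat, (Lx / lam) * v = INR n) ->
  (exists n : nat, (Ly / lam) * w = INR n) ->
  Rabs (b10 + v) <= 1 -> Rabs (b10 - v) <= 1 ->
  Rabs (b20 + w) <= 1 -> Rabs (b20 - w) <= 1 ->
  let mu := mu lam Lx Ly a1 a2 Cc P s2 in
  let m0 := mu b10 b20 in
  let m1p := mu (b10 + v) b20 in
  let m1m := mu (b10 - v) b20 in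
  let m2p := mu b10 (b20 + w) in
  let m2m := mu b10 (b20 - w) in
  (* well-definedness of the formulas (all denominators nonzero) *)
  m1p - s2 <> 0 -> m1m - s2 <> 0 -> m2p - s2 <> 0 -> m2m - s2 <> 0 ->
  sqrt (Rabs ((m0 - s2) / (m1p - s2))) <> 1 ->
  sqrt (Rabs ((m0 - s2) / (m1m - s2))) <> 1 ->
  sqrt (Rabs ((m0 - s2) / (m2p - s2))) <> 1 ->
  sqrt (Rabs ((m0 - s2) / (m2m - s2))) <> 1 ->
  let A1p := cand_plus b10 v m0 m1p s2 in   (* alpha_1^(1) / alpha_1^(2) *)
  let A1m := cand_minus b10 v m0 m1m s2 in  (* alpha_1^(3) / alpha_1^(4) *)
  let A2p := cand_plus b20 w m0 m2p s2 in
  let A2m := cand_minus b20 w m0 m2m s2 in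
  forall i j k l : bool,
    (forall i' j' : bool, Rabs (A1p i - A1m j) <= Rabs (A1p i' - A1m j')) ->
    (forall k' l' : bool, Rabs (A2p k - A2m l) <= Rabs (A2p k' - A2m l')) ->
    let bs1 := (A1p i + A1m j) / 2 in
    let bs2 := (A2p k + A2m l) / 2 in
    (-1 <= bs1 <= 1 /\ -1 <= bs2 <= 1) /\
    (forall b1 b2 : R, -1 <= b1 <= 1 -> -1 <= b2 <= 1 ->
       mu b1 b2 <= mu bs1 bs2 /\
       (mu b1 b2 = mu bs1 bs2 -> b1 = bs1 /\ b2 = bs2)).
Proof.
  intros Hlam HLx HLy Ha1 Ha2 HC HP Hs2 Hb10 Hb20 Hv Hw [n1 Hn1] [n2 Hn2] Hr1 Hr2 Hr3 Hr4
    mu0 m0 m1p m1m m2p m2m Hd1 Hd2 Hd3 Hd4 Hq1 Hq2 Hq3 Hq4 A1p A1m A2p A2m i j k l Hmin1 Hmin2 bs1 bs2.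
  assert (HK1 : 0 < Lx / lam) by (apply Rdiv_lt_0_compat; auto).
  assert (HK2 : 0 < Ly / lam) by (apply Rdiv_lt_0_compat; auto).
  assert (Hmu : forall b1 b2, mu0 b1 b2 = (P * Cmod Cc ^ 2) *
     (sinc (Lx/lam*PI*(a1-b1)) ^ 2 * sinc (Ly/lam*PI*(a2-b2)) ^ 2) + s2).
  { intros. unfold mu0. apply mu_form. lra. }
  assert (Hbs1 : bs1 = a1).
  { unfold bs1, A1p, A1m.
    apply (one_dim (Lx/lam) a1 b10 v (P * Cmod Cc ^ 2 * sinc (Ly/lam*PI*(a2-b20)) ^ 2) s2
             (fun b => mu0 b b20) n1); auto.
    intro b. cbv beta. rewrite Hmu. ring. }
  assert (Hbs2 : bs2 = a2).
  { unfold bs2, A2p, A2m.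
    apply (one_dim (Ly/lam) a2 b20 w (P * Cmod Cc ^ 2 * sinc (Lx/lam*PI*(a1-b10)) ^ 2) s2
             (fun b => mu0 b10 b) n2); auto.
    intro b. cbv beta. rewrite Hmu. ring. }
  rewrite Hbs1, Hbs2. split; [split; auto|].
  intros b1 b2 Hb1 Hb2.
  rewrite !Hmu. rewrite !Rminus_diag, !Rmult_0_r, sinc_0.
  assert (HG : 0 < P * Cmod Cc ^ 2).
  { apply Rmult_lt_0_compat; auto. apply pow_lt. apply Cmod_gt_0. auto. }
  destruct (sinc_sq_le (Lx / lam * PI * (a1 - b1))) as [Hs1 He1].
  destruct (sinc_sq_le (Ly / lam * PI * (a2 - b2))) as [Hs3 He3].
  pose proof (pow2_ge_0 (sinc (Lx / lam * PI * (a1 - b1)))).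
  pose proof (pow2_ge_0 (sinc (Ly / lam * PI * (a2 - b2)))).
  assert (Hpq1 : sinc (Lx / lam * PI * (a1 - b1)) ^ 2 * sinc (Ly / lam * PI * (a2 - b2)) ^ 2 <= 1 ^ 2 * 1 ^ 2).
  { replace (1 ^ 2 * 1 ^ 2) with (1 * 1) by ring. apply Rmult_le_compat; auto. }
  split.
  - apply Rplus_le_compat_r. apply Rmult_le_compat_l; lra.
  - intro Heq. pose proof PI_RGT_0.
    set (p := sinc (Lx / lam * PI * (a1 - b1)) ^ 2) in *.
    set (q := sinc (Ly / lam * PI * (a2 - b2)) ^ 2) in *.
    assert (Hpq : p * q = 1).
    { apply (Rmult_eq_reg_l (P * Cmod Cc ^ 2)); [|lra].
      replace (P * Cmod Cc ^ 2 * 1) with (P * Cmod Cc ^ 2 * (1 ^ 2 * 1 ^ 2)) by ring. lra. }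
    assert (E1 : p = 1).
    { destruct (Rle_lt_or_eq_dec p 1 Hs1) as [Hlt|]; auto.
      assert (p * q <= p * 1) by (apply Rmult_le_compat_l; lra). lra. }
    assert (E2 : q = 1).
    { destruct (Rle_lt_or_eq_dec q 1 Hs3) as [Hlt|]; auto.
      assert (p * q <= 1 * q) by (apply Rmult_le_compat_r; lra). lra. }
    apply He1 in E1. apply He3 in E2.
    apply Rmult_integral in E1. apply Rmult_integral in E2.
    split.
    + destruct E1 as [E1|E1]; [|lra]. apply Rmult_integral in E1. destruct E1; lra.
    + destruct E2 as [E2|E2]; [|lra]. apply Rmult_integral in E2. destruct E2; lra.
Qed.
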